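(* Let $f_c>0$, $B>0$, $t_{\max}>0$, let $K\ge 3$ be an odd integer, and for $k\in\{1,\dots,K\}$ let $f_k = f_c + \frac{B}{K}\left(k-1-\frac{K-1}{2}\right)$ and $\zeta_k=f_k/f_c$. Let $N\ge1$ and $m\ge1$ be integers, let $\psi_{c,l}\ge 0$, and define $\gamma_{n,m}^{(l)} = ((m-1)N+n-1)\psi_{c,l}$ for $n=1,\dots,N$, and $\vartheta_{\max}=2f_c t_{\max}$. Consider the problem $$\min_{x_{1,m}^{(l)},\dots,x_{N,m}^{(l)}\in\mathbb{R},\ \vartheta_m^{(l)}\in\mathbb{R}}\ \frac{1}{K}\sum_{k=1}^{K}\sum_{n=1}^{N}\left(x_{n,m}^{(l)}-\zeta_k\vartheta_m^{(l)}+\zeta_k\gamma_{n,m}^{(l)}\right)^2 \quad\text{subject to}\quad 0\le \vartheta_m^{(l)}\le\vartheta_{\max}.$$ Its optimal solution is given by $$x_{n,m}^{(l)\star}=\begin{cases}\frac{N-2n+1}{2}\psi_{c,l}, & \text{if } 0\le\psi_{c,l}\le \frac{4f_ct_{\max}}{(2m-1)N-1},\\[2pt] \vartheta_{\max}-\gamma_{n,m}^{(l)}, & \text{otherwise},\end{cases}\qquad n=1,\dots,N,$$ and $\vartheta_m^{(l)\star}=2f_c t_m^{(l)\star}$, where $$t_m^{(l)\star}=\begin{cases}\frac{(2m-1)N-1}{4f_c}\psi_{c,l}, & \text{if } 0\le\psi_{c,l}\le \frac{4f_ct_{\max}}{(2m-1)N-1},\\[2pt] t_{\max}, & \text{otherwise},\end{cases}$$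 with the convention that $\frac{4f_ct_{\max}}{(2m-1)N-1}=+\infty$ when $(2m-1)N-1=0$.
   Context: This is the phase-domain formulation of joint phase-shifter/true-time-delay precoding for one RF chain $l$ and one TTD index $m$: $x_{n,m}^{(l)}$ (in units of $\pi$) are the phase-shifter phases of the $N$ antennas connected to the $m$th TTD, $\vartheta_m^{(l)}=2f_ct_m^{(l)}$ with $t_m^{(l)}\in[0,t_{\max}]$ the TTD time delay, and $-\zeta_k\gamma_{n,m}^{(l)}$ is the phase (in units of $\pi$) of the optimal fully-digital precoder at subcarrier $k$. The paper assumes throughout that $\psi_{c,l}\ge 0$. *)

(* Defs.v *)
From mathcomp Require Import all_boot all_order all_algebra.
Set Implicit Arguments. Unset Strict Implicit. Unset Printing Implicit Defensive.
Import Order.TTheory GRing.Theory Num.Theory.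
Local Open Scope ring_scope.

Section PSTTD.
Variable R : realFieldType.

Definition freq (fc B : R) (K k : nat) : R :=
  fc + B / K%:R * (k%:R - 1 - (K%:R - 1) / 2).

Definition zeta (fc B : R) (K k : nat) : R := freq fc B K k / fc.

Definition gam (N m : nat) (psi : R) (n : nat) : R :=
  ((m%:R - 1) * N%:R + n%:R - 1) * psi.

Definition theta_max (fc tmax : R) : R := 2 * fc * tmax.

Definition objective (fc B : R) (K N m : nat) (psi : R) (x : nat -> R) (th : R) : R :=
  K%:R^-1 * \sum_(1 <= k < K.+1) \sum_(1 <= n < N.+1)
     (x n - zeta fc B K k * th + zeta fc B K k * gam N m psi n) ^+ 2.

Definition feasible (fc tmax th : R) : Prop := 0 <= th <= theta_max fc tmax.

Definition is_optimal (fc B tmax : R) (K N m : nat) (psi : R) (x : nat -> R) (th : R) : Prop :=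
  feasible fc tmax th /\
  forall (x' : nat -> R) (th' : R), feasible fc tmax th' ->
    objective fc B K N m psi x th <= objective fc B K N m psi x' th'.

Definition Dm (N m : nat) : R := (2 * m%:R - 1) * N%:R - 1.

Definition small_regime (fc tmax : R) (N m : nat) (psi : R) : bool :=
  (0 <= psi) && ((Dm N m == 0) || (psi <= 4 * fc * tmax / Dm N m)).

Definition x_star (fc tmax : R) (N m : nat) (psi : R) (n : nat) : R :=
  if small_regime fc tmax N m psi then (N%:R - 2 * n%:R + 1) / 2 * psi
  else theta_max fc tmax - gam N m psi n.

Definition t_star (fc tmax : R) (N m : nat) (psi : R) : R :=
  if small_regime fc tmax N m psi then Dm N m / (4 * fc) * psi
  else tmax.

End PSTTD.

(* Main.v *)
Require Import Defs.
From mathcomp Require Import all_boot all_order all_algebra.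
From mathcomp Require Import ring lra.
Import Order.TTheory GRing.Theory Num.Theory.
Local Open Scope ring_scope.

Ltac fld := field; try (by repeat (apply/andP; split); rewrite // ?pnatr_eq0).

Lemma sum_e (R : realFieldType) (M : nat) :
  \sum_(1 <= k < M.+1) ((k%:R : R) - 1 - (M%:R - 1)/2) = 0.
Proof.
have H : forall M, \sum_(1 <= k < M.+1) ((k%:R : R) - 1) = M%:R * (M%:R - 1) / 2.
  elim => [|M' IH]; first by rewrite big_geq // mul0r mul0r.
  by rewrite big_nat_recr //= IH -addn1 natrD; field.
by rewrite big_split /= H sumr_const_nat subn1 /= -mulr_natl; field.
Qed.

Lemma sq_sum (R : realFieldType) (M : nat) (u : nat -> R) (a b : R) :
  \sum_(1 <= k < M.+1) u k = 0 ->
  \sum_(1 <= k < M.+1) (a - u k * b) ^+ 2 =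
    a ^+ 2 *+ M + b ^+ 2 * \sum_(1 <= k < M.+1) (u k) ^+ 2.
Proof.
move=> Hu.
rewrite (eq_bigr (fun k => a ^+ 2 - (2 * a * b) * u k + b ^+ 2 * (u k) ^+ 2));
  last by move=> k _; ring.
by rewrite big_split sumrB /= sumr_const_nat -!mulr_sumr Hu subn1 /= mulr0 subr0.
Qed.

Definition eK (R : realFieldType) (M : nat) (k : nat) : R := k%:R - 1 - (M%:R - 1) / 2.

Lemma sum_zeta (R : realFieldType) (fc B : R) (K : nat) : fc != 0 -> (K%:R : R) != 0 ->
  \sum_(1 <= k < K.+1) (zeta fc B K k - 1) = 0.
Proof.
move=> hfc hK.
rewrite (eq_bigr (fun k => (B / K%:R / fc) * eK R K k)); last first.
  move=> k _; rewrite /zeta /freq /eK; fld.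
by rewrite -big_distrr /= /eK sum_e mulr0.
Qed.

Lemma obj_eq (R : realFieldType) (fc B : R) (K N m : nat) (psi : R) (x : nat -> R) (th : R) :
  fc != 0 -> (0 < K)%N ->
  let V := \sum_(1 <= k < K.+1) (zeta fc B K k - 1) ^+ 2 in
  let c := Dm R N m / 2 * psi in
  objective fc B K N m psi x th =
    \sum_(1 <= n < N.+1) (x n - (th - gam N m psi n)) ^+ 2 +
    V / K%:R * N%:R * (th - c) ^+ 2 +
    V / K%:R * \sum_(1 <= n < N.+1) (eK R N n * psi) ^+ 2.
Proof.
move=> hfc hK V c.
have hK' : (K%:R : R) != 0 by rewrite pnatr_eq0 -lt0n.
rewrite /objective exchange_big /=.
rewrite (eq_bigr (fun n => K%:R * (x n - (th - gam N m psi n)) ^+ 2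
                          + (th - gam N m psi n) ^+ 2 * V)); last first.
  move=> n _.
  rewrite (eq_bigr (fun k => ((x n - (th - gam N m psi n)) - (zeta fc B K k - 1) * (th - gam N m psi n)) ^+ 2)); last by move=> k _; ring.
  by rewrite sq_sum ?sum_zeta // mulr_natl.
rewrite mulr_sumr.
rewrite (eq_bigr (fun n => (x n - (th - gam N m psi n)) ^+ 2
                          + V / K%:R * ((th - c) - (eK R N n * psi) * 1) ^+ 2)); last first.
  move=> n _; rewrite /c /Dm /gam /eK; fld.
rewrite big_split /= -mulr_sumr sq_sum; last first.
  by rewrite -mulr_suml /eK sum_e mul0r.
rewrite expr1n mul1r -mulr_natr; ring.
Qed.

Theorem theorem1 (R : realFieldType) (fc B tmax : R) (K N m : nat) (psi : R) :
  0 < fc -> 0 < B -> 0 < tmax -> (3 <= K)%N -> odd K ->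
  (1 <= N)%N -> (1 <= m)%N -> 0 <= psi ->
  forall (x : nat -> R) (th : R),
    is_optimal fc B tmax K N m psi x th <->
    ((forall n : nat, (1 <= n <= N)%N -> x n = x_star fc tmax N m psi n) /\
     th = 2 * fc * t_star fc tmax N m psi).
Proof.
move=> hfc hB htm hK _ hN hm hpsi x th.
have hfc0 : fc != 0 by rewrite gt_eqF.
have hK0 : (0 < K)%N by apply: leq_trans hK.
have hKR : (3%:R : R) <= K%:R by rewrite ler_nat.
have hKn : (K%:R : R) != 0 by rewrite pnatr_eq0 -lt0n.
have hNR : (1 : R) <= N%:R by rewrite ler1n.
have hmR : (1 : R) <= m%:R by rewrite ler1n.
set V := \sum_(1 <= k < K.+1) (zeta fc B K k - 1) ^+ 2.
set c := Dm R N m / 2 * psi.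
set W := V / K%:R * N%:R.
have obj := fun x th => @obj_eq R fc B K N m psi x th hfc0 hK0.
rewrite -/V -/c -/W in obj.
have hV : 0 < V.
  rewrite /V big_ltn //.
  have h1 : zeta fc B K 1 - 1 = - (B / K%:R / fc * ((K%:R - 1) / 2)).
    rewrite /zeta /freq; fld.
  have hp : 0 < B / K%:R / fc * ((K%:R - 1) / 2).
    apply: mulr_gt0; first by apply: divr_gt0 => //; apply: divr_gt0 => //; lra.
    lra.
  have : 0 <= \sum_(2 <= k < K.+1) (zeta fc B K k - 1) ^+ 2.
    by apply: sumr_ge0 => i _; apply: sqr_ge0.
  rewrite h1 sqrrN.
  have := exprn_gt0 2 hp.
  move=> h2 h3. by apply: (lt_le_trans h2); rewrite lerDl.
have hW : 0 < W by rewrite /W; apply: mulr_gt0; [apply: divr_gt0 => //; lra | lra].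
have hD : 0 <= Dm R N m by rewrite /Dm; nra.
pose ths := if small_regime fc tmax N m psi then c else theta_max fc tmax.
have F1 : 2 * fc * t_star fc tmax N m psi = ths.
  rewrite /ths /t_star /c; case: ifP => _; last by [].
  fld.
have F2 : forall n, x_star fc tmax N m psi n = ths - gam N m psi n.
  move=> n; rewrite /x_star /ths /c; case: ifP => _ //.
  rewrite /Dm /gam; fld.
have Hns : ~~ small_regime fc tmax N m psi -> theta_max fc tmax < c.
  rewrite /small_regime hpsi /= negb_or => /andP [hD0 hlt].
  have hDp : 0 < Dm R N m by rewrite lt_def hD0 hD.
  rewrite -ltNge ltr_pdivrMr // in hlt.
  rewrite /theta_max /c; nra.
have F3 : feasible fc tmax ths.
  rewrite /feasible /ths; case: ifP => hs.
    move: hs; rewrite /small_regime hpsi /= => /orP [/eqP hD0|hle].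
      by rewrite /c hD0 /theta_max mul0r mul0r lexx /=; apply/ltW; nra.
    case: (eqVneq (Dm R N m) 0) => hD0.
      by rewrite /c hD0 /theta_max mul0r mul0r lexx /=; apply/ltW; nra.
    have hDp : 0 < Dm R N m by rewrite lt_def hD0 hD.
    rewrite ler_pdivlMr // in hle.
    apply/andP; split; rewrite /c /theta_max; nra.
  apply/andP; split; rewrite /theta_max ?lexx //; apply/ltW; nra.
have F4a : forall t, feasible fc tmax t -> (ths - c) ^+ 2 <= (t - c) ^+ 2.
  move=> t /andP [ht0 ht1]; rewrite /ths; case: ifP => hs.
    by rewrite subrr expr0n /= sqr_ge0.
  have := Hns (negbT hs); nra.
have F4b : forall t, feasible fc tmax t -> (t - c) ^+ 2 <= (ths - c) ^+ 2 -> t = ths.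
  move=> t /andP [ht0 ht1]; rewrite /ths; case: ifP => hs.
    rewrite subrr expr0n /= => h.
    have : (t - c) ^+ 2 = 0 by apply/le_anti; rewrite h sqr_ge0.
    by move/eqP; rewrite sqrf_eq0 subr_eq0 => /eqP.
  move=> h; have := Hns (negbT hs); move: h ht1; rewrite /theta_max => h ht1 hc.
  apply/le_anti/andP; split => //; nra.
have Sge0 : forall y t, 0 <= \sum_(1 <= n < N.+1) (y n - (t - gam N m psi n)) ^+ 2.
  by move=> y t; apply: sumr_ge0 => i _; apply: sqr_ge0.
split.
  move=> [Hf Hopt].
  have := Hopt (fun n => ths - gam N m psi n) ths F3.
  rewrite !obj.
  have Z : \sum_(1 <= n < N.+1) (ths - gam N m psi n - (ths - gam N m psi n)) ^+ 2 = 0.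
    by rewrite big1 // => i _; rewrite subrr expr0n.
  rewrite Z.
  move=> Hle.
  have hS := Sge0 x th.
  have h4 := F4a th Hf.
  have h5 : W * (th - c) ^+ 2 <= W * (ths - c) ^+ 2.
    have : W * (ths - c) ^+ 2 <= W * (th - c) ^+ 2 by rewrite ler_wpM2l // ltW.
    move: Hle; rewrite /W; lra.
  rewrite ler_pM2l // in h5.
  have eth := F4b th Hf h5.
  have hS0 : \sum_(1 <= n < N.+1) (x n - (th - gam N m psi n)) ^+ 2 = 0.
    apply/le_anti/andP; split => //; move: Hle; rewrite eth /W; lra.
  split; last by rewrite F1.
  move=> n hn.
  rewrite F2 -eth.
  have hin : n \in index_iota 1 N.+1 by rewrite mem_index_iota ltnS.
  move: hS0; rewrite (bigD1_seq n hin (iota_uniq _ _)) /=.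
  have hr : 0 <= \sum_(i <- index_iota 1 N.+1 | i != n) (x i - (th - gam N m psi i)) ^+ 2.
    by apply: sumr_ge0 => i _; apply: sqr_ge0.
  move=> h.
  have : (x n - (th - gam N m psi n)) ^+ 2 = 0.
    apply/le_anti/andP; split; last exact: sqr_ge0.
    by move: h hr; lra.
  by move/eqP; rewrite sqrf_eq0 subr_eq0 => /eqP.
move=> [Hx Hth].
rewrite F1 in Hth; subst th.
split => // x' th' Hf'.
rewrite !obj.
have -> : \sum_(1 <= n < N.+1) (x n - (ths - gam N m psi n)) ^+ 2 = 0.
  rewrite (eq_big_nat _ _ (F2 := fun _ => 0)); first by rewrite big1.
  by move=> i hi; rewrite Hx // F2 subrr expr0n.
have := Sge0 x' th'.
have : W * (ths - c) ^+ 2 <= W * (th' - c) ^+ 2 by rewrite ler_wpM2l ?F4a // ltW.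
rewrite /W; lra.
Qed.
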